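(* Let $(M,\circ,\mathrm{OR})$ be a free $\mathbb{D}$-module of rank 3 with scalar product and orientation, and let $x,y,z\in M\setminus\epsilon M$ satisfy $x+y+z=0$. Then $$\frac{\sin\alpha_{xy}}{|z|}=\frac{\sin\alpha_{yz}}{|x|}=\frac{\sin\alpha_{zx}}{|y|}.$$
   Context: $\mathbb{D}=\{a+\epsilon b: a,b\in\mathbb{R}\}$, $\epsilon^2=0$, $\mathfrak{Re}(a+\epsilon b)=a$; real-analytic functions are extended by $f(a+\epsilon b)=f(a)+\epsilon bf'(a)$; dual numbers with nonzero real part are invertible. Scalar product: symmetric $\mathbb{D}$-bilinear $\circ:M\times M\to\mathbb{D}$ with $\mathfrak{Re}(x\circ x)\ge0$, equality iff $x\in\epsilon M$; orientation: one of the two classes of ordered bases under $\{b'_j=A_{jk}b_k\}\sim\{b_k\}$ iff $\det\mathfrak{Re}(A)>0$. For $x\notin\epsilon M$, $|x|:=\sqrt{x\circ x}$ (positive real part). For $x,y\in M\setminus\epsilon M$ the dual angle $\Theta_{xy}$ is the unique dual number in $\{0\}\cup((0,\pi)+\epsilon\mathbb{R})\cup\{\pi\}$ with $\cos\Theta_{xy}=\frac{x\circ y}{|x|\,|y|}$, and $\alpha_{xy}:=\pi-\Theta_{xy}$. *)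

(* Defs.v *)
From Stdlib Require Import Reals Lra ClassicalEpsilon.
Open Scope R_scope.

(** * Dual numbers  D = { a + eps b },  eps^2 = 0 *)
Record dual : Type := Dual { re : R; du : R }.

Definition d0 : dual := Dual 0 0.
Definition deps : dual := Dual 0 1.
Definition dadd (u v : dual) : dual := Dual (re u + re v) (du u + du v).
Definition dopp (u : dual) : dual := Dual (- re u) (- du u).
Definition dmul (u v : dual) : dual :=
  Dual (re u * re v) (re u * du v + du u * re v).
(* inverse; meaningful when re u <> 0 *)
Definition dinv (u : dual) : dual := Dual (/ re u) (- du u / (re u * re u)).
Definition ddiv (u v : dual) : dual := dmul u (dinv v).

(** Extension of real-analytic functions: f(a + eps b) = f a + eps b f'(a). *)
Definition dsin (u : dual) : dual := Dual (sin (re u)) (du u * cos (re u)).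
Definition dcos (u : dual) : dual := Dual (cos (re u)) (- du u * sin (re u)).
(* square root, used for arguments with positive real part *)
Definition dsqrt (u : dual) : dual := Dual (sqrt (re u)) (du u / (2 * sqrt (re u))).

(** * The free D-module of rank 3, realised as D^3 *)
Record V3 : Type := Vec { c1 : dual; c2 : dual; c3 : dual }.

Definition vzero : V3 := Vec d0 d0 d0.
Definition vadd (x y : V3) : V3 := Vec (dadd (c1 x) (c1 y)) (dadd (c2 x) (c2 y)) (dadd (c3 x) (c3 y)).
Definition vscale (a : dual) (x : V3) : V3 := Vec (dmul a (c1 x)) (dmul a (c2 x)) (dmul a (c3 x)).

Definition in_epsM (x : V3) : Prop := exists w : V3, x = vscale deps w.

Record is_scalar_product (sp : V3 -> V3 -> dual) : Prop := {
  sp_sym : forall x y, sp x y = sp y x;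
  sp_addl : forall x y z, sp (vadd x y) z = dadd (sp x z) (sp y z);
  sp_scalel : forall a x y, sp (vscale a x) y = dmul a (sp x y);
  sp_pos : forall x, 0 <= re (sp x x);
  sp_zero : forall x, re (sp x x) = 0 <-> in_epsM x
}.

Definition dnorm (sp : V3 -> V3 -> dual) (x : V3) : dual := dsqrt (sp x x).

Definition angle_range (t : dual) : Prop :=
  t = d0 \/ (0 < re t < PI) \/ t = Dual PI 0.

Definition is_dual_angle (sp : V3 -> V3 -> dual) (x y : V3) (t : dual) : Prop :=
  angle_range t /\ dcos t = ddiv (sp x y) (dmul (dnorm sp x) (dnorm sp y)).

Definition Theta (sp : V3 -> V3 -> dual) (x y : V3) : dual :=
  epsilon (inhabits d0) (is_dual_angle sp x y).

Definition alpha (sp : V3 -> V3 -> dual) (x y : V3) : dual :=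
  dadd (Dual PI 0) (dopp (Theta sp x y)).

(* Main.v *)
Require Import Defs.
From Stdlib Require Import Reals Lra Nsatz ClassicalEpsilon.
Open Scope R_scope.

Lemma dual_eq u v : re u = re v -> du u = du v -> u = v.
Proof. destruct u, v; simpl; intros; subst; reflexivity. Qed.
Lemma pair_sq (A B C D t : dual) :
  0 < re A -> 0 < re B -> 0 < re D ->
  dcos t = ddiv C (dmul (dsqrt A) (dsqrt B)) ->
  let r := ddiv (dsin (dadd (Dual PI 0) (dopp t))) (dsqrt D) in
  dmul (dmul r r) (dmul (dmul A B) D) = dadd (dmul A B) (dopp (dmul C C)).
Proof.
  destruct A as [a1 a2], B as [b1 b2], C as [c1 c2], D as [d1 d2], t as [t1 t2].
  simpl. intros Ha Hb Hd Hc.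
  injection Hc; clear Hc; intros H2 H1.
  unfold ddiv, dmul, dinv, dsin, dsqrt, dadd, dopp; simpl.
  replace (PI + - t1) with (PI - t1) by ring.
  rewrite sin_PI_x, Rtrigo_facts.cos_pi_minus.
  idtac.
  assert (Hs : sin t1 * sin t1 = 1 - cos t1 * cos t1) by (pose proof (sin2_cos2 t1); unfold Rsqr in *; lra).
  set (s := sin t1) in *. set (co := cos t1) in *. clearbody s co.
  pose proof (sqrt_lt_R0 _ Ha) as Pa. pose proof (sqrt_lt_R0 _ Hb) as Pb. pose proof (sqrt_lt_R0 _ Hd) as Pd.
  pose proof (sqrt_sqrt a1 (Rlt_le _ _ Ha)) as Ea.
  pose proof (sqrt_sqrt b1 (Rlt_le _ _ Hb)) as Eb.
  pose proof (sqrt_sqrt d1 (Rlt_le _ _ Hd)) as Ed.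
  set (sa := sqrt a1) in *. set (sb := sqrt b1) in *. set (sd := sqrt d1) in *.
  clearbody sa sb sd. subst a1 b1 d1.
  assert (H1' : co * (sa*sb) = c1) by (rewrite H1; field; lra).
  assert (H2' : - t2 * s * (2 * sa * sa * sb * sb) = - c1 * (sa * sa * b2 + a2 * sb * sb) / (sa * sb) + 2 * c2 * sa * sb)
    by (rewrite H2; field; lra).
  assert (Hs' : s * s * (sa * sa * sb * sb) = sa * sa * sb * sb - c1 * c1) by (rewrite Hs, <- H1'; ring).
  apply dual_eq; simpl.
  - field_simplify; try lra.
  - field_simplify; try lra.
    assert (K : t2 * s * sa ^ 2 * sb ^ 2 = - ((2 * sa ^ 2 * sb ^ 2 * c2 - sa ^ 2 * c1 * b2 - sb ^ 2 * c1 * a2) / (sa * sb)) / 2).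
    { field_simplify in H2'; try lra. }
    assert (Hs2 : s ^ 2 = 1 - co ^ 2) by lra.
    set (X := sa ^ 2 * b2 + sb ^ 2 * a2).
    replace ((2 * s ^ 2 * sd ^ 2 * sa ^ 2 * b2 + 2 * s ^ 2 * sd ^ 2 * sb ^ 2 * a2 +
  4 * s * sd ^ 2 * sa ^ 2 * sb ^ 2 * t2 * co) / (2 * sd ^ 2)) with
      (s ^ 2 * X + 2 * (t2 * s * sa ^ 2 * sb ^ 2) * co) by (unfold X; field; lra).
    rewrite K, Hs2, H1. unfold X. field. lra.
Qed.
Lemma sp_eps sp (Hsp : is_scalar_product sp) w : in_epsM w -> sp w w = d0.
Proof.
  intros [w' ->]. rewrite (sp_scalel _ Hsp), (sp_sym _ Hsp), (sp_scalel _ Hsp).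
  destruct (sp w' w') as [p q]. unfold dmul, deps, d0; simpl. apply dual_eq; simpl; ring.
Qed.

Lemma sp_posdef sp (Hsp : is_scalar_product sp) u : ~ in_epsM u -> 0 < re (sp u u).
Proof.
  intros H. pose proof (sp_pos _ Hsp u). destruct (Rle_lt_or_eq_dec _ _ H0); auto.
  exfalso. apply H. apply (sp_zero _ Hsp). auto.
Qed.

Lemma cs sp (Hsp : is_scalar_product sp) u v : ~ in_epsM u -> ~ in_epsM v ->
  let G := dadd (dmul (sp u u) (sp v v)) (dopp (dmul (sp u v) (sp u v))) in
  0 <= re G /\ (re G = 0 -> du G = 0).
Proof.
  intros Hu Hv G.
  pose proof (sp_posdef _ Hsp _ Hv) as Hb.
  set (s0 := - re (sp u v) / re (sp v v)).
  set (w := vadd u (vscale (Dual s0 0) v)).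
  assert (E : sp w w = dadd (dadd (sp u u) (dmul (Dual s0 0) (sp u v))) (dmul (Dual s0 0) (dadd (sp u v) (dmul (Dual s0 0) (sp v v))))).
  { unfold w. rewrite (sp_addl _ Hsp), (sp_scalel _ Hsp).
    rewrite (sp_sym _ Hsp u), (sp_addl _ Hsp), (sp_scalel _ Hsp).
    rewrite (sp_sym _ Hsp v (vadd _ _)), (sp_addl _ Hsp), (sp_scalel _ Hsp).
    rewrite (sp_sym _ Hsp v u). reflexivity. }
  pose proof (sp_pos _ Hsp w) as Pw.
  assert (Z : re (sp w w) = 0 -> sp w w = d0).
  { intro H. apply (sp_eps _ Hsp). apply (sp_zero _ Hsp). auto. }
  rewrite E in Pw, Z. unfold G. clear E G.
  unfold s0 in *. clear s0 w.
  destruct (sp u u) as [a1 a2], (sp v v) as [b1 b2], (sp u v) as [c1 c2].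
  simpl in *.
  assert (Q : a1 + - c1 / b1 * c1 + - c1 / b1 * (c1 + - c1 / b1 * b1) = (a1 * b1 + - (c1 * c1)) / b1) by (field; lra).
  rewrite Q in Pw, Z. split.
  - apply Rmult_le_reg_r with (/ b1). apply Rinv_0_lt_compat; lra. rewrite Rmult_0_l. exact Pw.
  - intro H0. rewrite H0 in Z. unfold Rdiv in Z. rewrite Rmult_0_l in Z. specialize (Z eq_refl).
    injection Z. intros Z2 _. field_simplify in Z2; try lra.
    assert (N : a2 * b1 ^ 2 + c1 ^ 2 * b2 - 2 * c1 * b1 * c2 = 0).
    { apply (f_equal (fun t => t * b1 ^ 2)) in Z2. field_simplify in Z2; lra. }
    assert (H0b : (a1 * b1 + - (c1 * c1)) * b2 = 0) by (rewrite H0; ring).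
    apply Rmult_eq_reg_r with b1; [|lra]. ring_simplify. ring_simplify in N. ring_simplify in H0b. lra.
Qed.
Lemma ex_angle (A B C : dual) : 0 < re A -> 0 < re B ->
  let G := dadd (dmul A B) (dopp (dmul C C)) in
  0 <= re G -> (re G = 0 -> du G = 0) ->
  exists t, angle_range t /\ dcos t = ddiv C (dmul (dsqrt A) (dsqrt B)).
Proof.
  destruct A as [a1 a2], B as [b1 b2], C as [c1 c2].
  simpl. intros Ha Hb HG HG0.
  pose proof (sqrt_lt_R0 _ Ha) as Pa. pose proof (sqrt_lt_R0 _ Hb) as Pb.
  pose proof (sqrt_sqrt a1 (Rlt_le _ _ Ha)) as Ea.
  pose proof (sqrt_sqrt b1 (Rlt_le _ _ Hb)) as Eb.
  unfold ddiv, dmul, dinv, dsqrt, dcos, angle_range; simpl.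
  set (sa := sqrt a1) in *. set (sb := sqrt b1) in *.
  clearbody sa sb. subst a1 b1.
  set (k1 := c1 * / (sa * sb)).
  set (k2 := c1 * (- (sa * (b2 / (2 * sb)) + a2 / (2 * sa) * sb) / (sa * sb * (sa * sb))) + c2 * / (sa * sb)).
  assert (Hk : k1 * k1 <= 1).
  { unfold k1. replace (c1 * / (sa * sb) * (c1 * / (sa * sb))) with (c1 * c1 / (sa*sa*(sb*sb))) by (field; lra).
    apply Rmult_le_reg_r with (sa*sa*(sb*sb)). nra. unfold Rdiv. rewrite Rmult_assoc, Rinv_l by nra. lra. }
  destruct (Rle_lt_or_eq_dec _ _ Hk) as [Hlt|Heq].
  - assert (Hb1 : -1 < k1 < 1) by nra.
    pose proof (acos_bound_lt _ Hb1) as Hac.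
    pose proof (sin_gt_0 _ (proj1 Hac) (proj2 Hac)) as Hs.
    exists (Dual (acos k1) (- k2 / sin (acos k1))). split.
    + right; left; simpl; exact Hac.
    + apply dual_eq; simpl.
      * apply cos_acos; lra.
      * field. lra.
  - assert (Hg0 : sa * sa * (sb * sb) + - (c1 * c1) = 0).
    { unfold k1 in Heq. field_simplify in Heq; try nra. apply (f_equal (fun t => t * (sa^2*sb^2))) in Heq. field_simplify in Heq; try nra. }
    specialize (HG0 Hg0).
    assert (K2 : k2 = 0).
    { unfold k2. replace (c1 *
  (- (sa * (b2 / (2 * sb)) + a2 / (2 * sa) * sb) / (sa * sb * (sa * sb))) +
  c2 * / (sa * sb)) with ((- c1 * (sa * sa * b2 + a2 * (sb * sb)) + 2 * c2 * (sa * sa * (sb * sb))) / (2 * (sa * sb) ^ 3)) by (field; lra).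
      replace (sa * sa * b2 + a2 * (sb * sb)) with (2 * c1 * c2) by lra.
      replace (sa * sa * (sb * sb)) with (c1 * c1) by lra. unfold Rdiv. ring. }
    rewrite K2.
    assert (k1 = 1 \/ k1 = -1) as [E1|E1] by nra; rewrite E1.
    + exists d0. split. left; reflexivity. apply dual_eq; simpl. rewrite cos_0; reflexivity. rewrite sin_0; ring.
    + exists (Dual PI 0). split. right; right; reflexivity. apply dual_eq; simpl. rewrite cos_PI; reflexivity. rewrite sin_PI; ring.
Qed.

Lemma theta_spec sp (Hsp : is_scalar_product sp) u v : ~ in_epsM u -> ~ in_epsM v ->
  is_dual_angle sp u v (Theta sp u v).
Proof.
  intros Hu Hv. unfold Theta. apply epsilon_spec.
  destruct (cs _ Hsp u v Hu Hv) as [H1 H2].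
  destruct (ex_angle (sp u u) (sp v v) (sp u v) (sp_posdef _ Hsp _ Hu) (sp_posdef _ Hsp _ Hv) H1 H2) as [t Ht].
  exists t. exact Ht.
Qed.

Lemma r_pos (t D : dual) : angle_range t -> 0 < re D ->
  let r := ddiv (dsin (dadd (Dual PI 0) (dopp t))) (dsqrt D) in r = d0 \/ 0 < re r.
Proof.
  intros Ht HD r. unfold r; clear r.
  pose proof (sqrt_lt_R0 _ HD) as Pd.
  destruct Ht as [->|[Ht| ->]].
  - left. apply dual_eq; unfold ddiv, dmul, dsin, dadd, dopp, d0; simpl;
    replace (PI + - 0) with PI by ring; rewrite sin_PI; ring.
  - right. destruct t as [t1 t2]. simpl in *. unfold ddiv, dmul, dsin, dadd, dopp; simpl.
    replace (PI + - t1) with (PI - t1) by ring. rewrite sin_PI_x.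
    pose proof (sin_gt_0 t1 (proj1 Ht) (proj2 Ht)).
    apply Rmult_lt_0_compat; auto. apply Rinv_0_lt_compat; auto.
  - left. apply dual_eq; unfold ddiv, dmul, dsin, dadd, dopp, d0; simpl;
    replace (PI + - PI) with 0 by ring; rewrite sin_0; ring.
Qed.

Lemma sqrt_uniq r1 r2 : (r1 = d0 \/ 0 < re r1) -> (r2 = d0 \/ 0 < re r2) ->
  dmul r1 r1 = dmul r2 r2 -> r1 = r2.
Proof.
  intros H1 H2 E. destruct r1 as [p1 q1], r2 as [p2 q2]. unfold dmul in E; simpl in *.
  injection E; intros E2 E1. unfold d0 in *.
  destruct H1 as [H1|H1], H2 as [H2|H2].
  - congruence.
  - injection H1; intros; subst. nra.
  - injection H2; intros; subst. nra.
  - assert (p1 = p2) by nra. subst. f_equal. nra.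
Qed.

Lemma cancel u v P P' g g' : dmul u P = g -> dmul v P' = g' -> P = P' -> g = g' -> re P <> 0 -> u = v.
Proof.
  intros H1 H2 -> -> HP. destruct u as [u1 u2], v as [v1 v2], P' as [p1 p2].
  unfold dmul in *; simpl in *. rewrite <- H2 in H1. injection H1; intros E2 E1.
  assert (u1 = v1). { apply Rmult_eq_reg_r with p1; auto. }
  subst. f_equal. apply Rmult_eq_reg_r with p1; auto. lra.
Qed.

Theorem theorem19 (sp : V3 -> V3 -> dual) (Hsp : is_scalar_product sp)
  (x y z : V3) (Hx : ~ in_epsM x) (Hy : ~ in_epsM y) (Hz : ~ in_epsM z)
  (Hsum : vadd (vadd x y) z = vzero) :
  ddiv (dsin (alpha sp x y)) (dnorm sp z) = ddiv (dsin (alpha sp y z)) (dnorm sp x) /\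
  ddiv (dsin (alpha sp y z)) (dnorm sp x) = ddiv (dsin (alpha sp z x)) (dnorm sp y).
Proof.
  assert (Hzw : forall w, sp z w = dopp (dadd (sp x w) (sp y w))).
  { intro w. assert (E : sp (vadd (vadd x y) z) w = sp vzero w) by (rewrite Hsum; reflexivity).
    assert (Z : vzero = vscale d0 vzero).
    { unfold vzero, vscale, d0, dmul; simpl. f_equal; apply dual_eq; simpl; ring. }
    rewrite Z, (sp_scalel _ Hsp), !(sp_addl _ Hsp) in E.
    destruct (sp x w) as [p1 q1], (sp y w) as [p2 q2], (sp z w) as [p3 q3], (sp vzero w) as [p4 q4].
    unfold dadd, dmul, d0 in E; simpl in E. injection E; intros.
    apply dual_eq; simpl; lra. }
  pose proof (sp_posdef _ Hsp _ Hx) as Px.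
  pose proof (sp_posdef _ Hsp _ Hy) as Py.
  pose proof (sp_posdef _ Hsp _ Hz) as Pz.
  destruct (theta_spec _ Hsp x y Hx Hy) as [R1 C1].
  destruct (theta_spec _ Hsp y z Hy Hz) as [R2 C2].
  destruct (theta_spec _ Hsp z x Hz Hx) as [R3 C3].
  pose proof (pair_sq _ _ _ _ _ Px Py Pz C1) as S1.
  pose proof (pair_sq _ _ _ _ _ Py Pz Px C2) as S2.
  pose proof (pair_sq _ _ _ _ _ Pz Px Py C3) as S3.
  pose proof (r_pos _ _ R1 Pz) as Q1.
  pose proof (r_pos _ _ R2 Px) as Q2.
  pose proof (r_pos _ _ R3 Py) as Q3.
  cbv zeta in S1, S2, S3, Q1, Q2, Q3.
  unfold alpha, dnorm.
  set (r1 := ddiv (dsin (dadd (Dual PI 0) (dopp (Theta sp x y)))) (dsqrt (sp z z))) in *.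
  set (r2 := ddiv (dsin (dadd (Dual PI 0) (dopp (Theta sp y z)))) (dsqrt (sp x x))) in *.
  set (r3 := ddiv (dsin (dadd (Dual PI 0) (dopp (Theta sp z x)))) (dsqrt (sp y y))) in *.
  clearbody r1 r2 r3.
  assert (PP : 0 < re (dmul (dmul (sp x x) (sp y y)) (sp z z))).
  { simpl. apply Rmult_lt_0_compat; auto. apply Rmult_lt_0_compat; auto. }
  rewrite (Hzw z) in S1, S2, S3, PP.
  rewrite (sp_sym _ Hsp x z), (sp_sym _ Hsp y z) in S1, S2, S3, PP.
  rewrite (Hzw x), (Hzw y) in S1, S2, S3, PP. rewrite (sp_sym _ Hsp y x) in S1, S2, S3, PP.
  clear - S1 S2 S3 Q1 Q2 Q3 PP.
  destruct (sp x x) as [a1 a2], (sp y y) as [b1 b2], (sp x y) as [c1 c2].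
  assert (E12 : r1 = r2).
  { apply sqrt_uniq; auto. eapply cancel; [exact S1|exact S2| | |lra]; apply dual_eq; simpl; ring. }
  assert (E23 : r2 = r3).
  { apply sqrt_uniq; auto. eapply cancel; [exact S2|exact S3| | | ]; try (apply dual_eq; simpl; ring).
    simpl in PP |- *. nra. }
  auto.
Qed.
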